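(* Let $n\ge1$ and let $d>n+1$ be a prime. Let $A_1=\dots=A_n=C_1=\dots=C_n=\mathbb{C}^d$ with computational basis $\{|0\rangle,\dots,|d-1\rangle\}$, and let $M_n=I_n+E_n$ be the $n\times n$ matrix with $2$ on the diagonal and $1$ everywhere else ($I_n$ the identity, $E_n$ the all-ones matrix). Then $U_{d,n}|\vec x\rangle=|M_n\vec x\rangle$, where $|\vec x\rangle=|x_1\rangle\cdots|x_n\rangle$ for $\vec x\in\{0,\dots,d-1\}^n$ and all arithmetic is modulo $d$, defines a maximally $I_3$-scrambling unitary $U_{d,n}:A_1\otimes\cdots\otimes A_n\to C_1\otimes\cdots\otimes C_n$, i.e. \[ I_3(A_i;A_i^c;C_j)=-2\log\min\{|A_i|,|A_i^c|,|C_j|,|C_j^c|\}\quad\text{for all }i,j. \]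
   Context: The Choi state of $U$ is $\rho=U_{A_1'\dots A_n'\to C_1\dots C_n}\bigl(\bigotimes_i\Phi^+_{A_iA_i'}\bigr)U^\dagger$, with $\Phi^+_{XX'}=|X|^{-1/2}\sum_k|kk\rangle$; informations are evaluated on it. $A_i^c$ (resp. $C_j^c$) denotes the composite of all input (resp. output) systems other than $A_i$ (resp. $C_j$), and $|X|$ denotes dimension. Entropies are von Neumann (base-2), $I(X;Y)=S(X)+S(Y)-S(XY)$, $I_3(X;Y;Z)=I(X;Y)+I(X;Z)-I(X;YZ)$. *)

(* Defs.v *)
From HB Require Import structures.
From mathcomp Require Import all_boot all_order all_algebra.
From mathcomp Require Import spectral.
From mathcomp Require Import complex.
From mathcomp Require Import reals exp.

Set Implicit Arguments.
Unset Strict Implicit.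
Unset Printing Implicit Defensive.

Import Order.TTheory GRing.Theory Num.Theory.
Local Open Scope ring_scope.

(* The eigenvalues (with multiplicity) are the roots of the            *)
(* characteristic polynomial, which splits over the closed field R[i]. *)

Definition spectrum (R : realType) (k : nat) (M : 'M[R[i]]_k) : seq R[i] :=
  sval (closed_field_poly_normal (char_poly M)).

Definition log2 (R : realType) (x : R) : R := ln x / ln 2.

Definition xlog2 (R : realType) (x : R) : R :=
  if x == 0 then 0 else x * log2 x.

Definition vN_entropy (R : realType) (k : nat) (M : 'M[R[i]]_k) : R :=
  - \sum_(z <- spectrum M) xlog2 (complex.Re z).

(* Multipartite systems: a finite set Sys of subsystems, each with     *)
(* computational basis indexed by the finite type Q.  A (mixed) state  *)
(* on the whole system is given by its matrix entries                  *)
(* rho s t = <s| rho |t> on basis configurations s t : Sys -> Q.        *)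

Definition cfg (Sys Q : finType) (X : {set Sys}) : finType :=
  {ffun {i : Sys | i \in X} -> Q}.

Lemma notin_setC_in (Sys : finType) (X : {set Sys}) (i : Sys) :
  i \notin X -> i \in ~: X.
Proof. by rewrite in_setC. Qed.

Definition glue (Sys Q : finType) (X : {set Sys})
    (a : cfg Q X) (c : cfg Q (~: X)) : {ffun Sys -> Q} :=
  [ffun i => match boolP (i \in X) with
             | AltTrue h => a (exist _ i h)
             | AltFalse h => c (exist _ i (notin_setC_in h))
             end].

Definition kernel (R : realType) (Sys Q : finType) :=
  {ffun Sys -> Q} -> {ffun Sys -> Q} -> R[i].

(* reduced density matrix rho_X = Tr_{X^c} rho, as a matrix indexed by
   (an enumeration of) the configurations of X *)
Definition reduced (R : realType) (Sys Q : finType) (rho : kernel R Sys Q)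
    (X : {set Sys}) : 'M[R[i]]_#|cfg Q X| :=
  \matrix_(i, j) \sum_(c : cfg Q (~: X))
      rho (glue (enum_val i) c) (glue (enum_val j) c).

Definition entropy (R : realType) (Sys Q : finType) (rho : kernel R Sys Q)
    (X : {set Sys}) : R := vN_entropy (reduced rho X).

Definition mutinf (R : realType) (Sys Q : finType) (rho : kernel R Sys Q)
    (X Y : {set Sys}) : R :=
  entropy rho X + entropy rho Y - entropy rho (X :|: Y).

Definition I3 (R : realType) (Sys Q : finType) (rho : kernel R Sys Q)
    (X Y Z : {set Sys}) : R :=
  mutinf rho X Y + mutinf rho X Z - mutinf rho X (Y :|: Z).

Definition dimsys (R : realType) (Sys Q : finType) (X : {set Sys}) : R :=
  (#|cfg Q X|)%:R.

(* Subsystems: inl i = A_i, inr j = C_j.  The register A_1..A_n (and   *)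
(* A_1'..A_n', C_1..C_n) has basis the column vectors 'cV[Q]_n; U is a *)
(* matrix indexed through enum_rank of these basis vectors.            *)

Definition Sys (n : nat) : finType := ('I_n + 'I_n)%type.

Definition Apart (n : nat) (Q : finType) (s : {ffun Sys n -> Q}) : 'cV[Q]_n :=
  \col_i s (inl i).
Definition Cpart (n : nat) (Q : finType) (s : {ffun Sys n -> Q}) : 'cV[Q]_n :=
  \col_j s (inr j).

(* amplitude of the maximally entangled state Phi^+_{AA'} (all n pairs)
   on |a>_A |a'>_{A'} : |AA'|^{-1/2}... i.e. |A|^{-1/2} [a = a'] *)
Definition phiplus (R : realType) (n : nat) (Q : finType)
    (a a' : 'cV[Q]_n) : R[i] :=
  ((Num.sqrt (#|'cV[Q]_n|%:R : R))^-1)%:C%C * (a == a')%:R.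

(* amplitude of (id_A (x) U)|Phi^+> on the configuration s of A_1..A_n C_1..C_n *)
Definition choi_amp (R : realType) (n : nat) (Q : finType)
    (U : 'M[R[i]]_#|'cV[Q]_n|) (s : {ffun Sys n -> Q}) : R[i] :=
  \sum_(a' : 'cV[Q]_n)
     U (enum_rank (Cpart s)) (enum_rank a') * phiplus R (Apart s) a'.

Definition choi (R : realType) (n : nat) (Q : finType)
    (U : 'M[R[i]]_#|'cV[Q]_n|) : kernel R (Sys n) Q :=
  fun s t => choi_amp U s * (choi_amp U t)^*%C.

Definition max_I3_scrambling (R : realType) (n : nat) (Q : finType)
    (U : 'M[R[i]]_#|'cV[Q]_n|) : Prop :=
  forall i j : 'I_n,
    let Ai  := [set (inl i : Sys n)] in
    let Aic := [set (inl k : Sys n) | k : 'I_n & k != i] in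
    let Cj  := [set (inr j : Sys n)] in
    let Cjc := [set (inr k : Sys n) | k : 'I_n & k != j] in
    I3 (choi U) Ai Aic Cj =
      - 2 * log2 (Num.min (Num.min (dimsys R Q Ai) (dimsys R Q Aic))
                          (Num.min (dimsys R Q Cj) (dimsys R Q Cjc))).

(* (d prime: 'F_d = Z/dZ, whose elements index |0>,...,|d-1>).          *)

Definition Mn (d n : nat) : 'M['F_d]_n := 1%:M + const_mx 1.

Definition Udn (R : realType) (d n : nat) : 'M[R[i]]_#|'cV['F_d]_n| :=
  \matrix_(y, x) ((enum_val y == Mn d n *m enum_val x)%:R).

(* Main.v *)
Require Import Defs.
From HB Require Import structures.
From mathcomp Require Import all_boot all_order all_algebra.
From mathcomp Require Import spectral complex reals exp.
From mathcomp Require Import ring.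
Import Order.TTheory GRing.Theory Num.Theory.
Local Open Scope ring_scope.
Set Implicit Arguments.
Unset Strict Implicit.
Unset Printing Implicit Defensive.

Lemma ReD_ (R : realType) (x y : R[i]) : complex.Re (x + y) = complex.Re x + complex.Re y.
Proof. by case: x; case: y. Qed.

Lemma Re_sum (R : realType) (s : seq R[i]) :
  \sum_(z <- s) complex.Re z = complex.Re (\sum_(z <- s) z).
Proof.
elim: s => [|z s IH]; first by rewrite !big_nil.
by rewrite !big_cons IH ReD_.
Qed.

Lemma vN_flat (R : realType) k (M : 'M[R[i]]_k) (lam : R) :
  0 < lam -> M *m M = lam%:C%C *: M -> \tr M = 1 -> vN_entropy M = - log2 lam.
Proof.
move=> lam0 MM trM.
have hs : char_poly M = \prod_(z <- spectrum M) ('X - z%:P).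
  rewrite /spectrum; case: (closed_field_poly_normal _) => s /= ->.
  by rewrite (monicP (char_poly_monic M)) scale1r.
have hk : (0 < k)%N.
  case: k M trM {hs MM} => // M; rewrite /mxtrace big_ord0 => /eqP.
  by rewrite eq_sym oner_eq0.
have hsz : size (spectrum M) = k.
  have := size_char_poly M; rewrite hs size_prod_XsubC.
  by case.
have hroot z : z \in spectrum M -> z = 0 \/ z = lam%:C%C.
  move=> zs.
  have : eigenvalue M z by rewrite eigenvalue_root_char hs root_prod_XsubC.
  case/eigenvalueP => v vM v0.
  have e1 : v *m M *m M = (z * z) *: v by rewrite vM -scalemxAl vM scalerA.
  have e2 : v *m M *m M = (lam%:C%C * z) *: v.
    by rewrite -mulmxA MM -scalemxAr vM scalerA.
  have : (z * z - lam%:C%C * z) *: v = 0 by rewrite scalerBl -e1 -e2 subrr.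
  move/eqP; rewrite scaler_eq0 (negbTE v0) orbF -mulrBl mulf_eq0 subr_eq0.
  by case/orP => /eqP; [right|left].
have hsum : \sum_(z <- spectrum M) z = 1.
  have := char_poly_trace M hk.
  rewrite hs.
  have -> : k.-1 = (size (spectrum M)).-1 by rewrite hsz.
  rewrite coefPn_prod_XsubC ?hsz -?lt0n // trM.
  by move/eqP; rewrite eqr_opp => /eqP.
rewrite /vN_entropy.
have -> : \sum_(z <- spectrum M) xlog2 (complex.Re z) =
          \sum_(z <- spectrum M) complex.Re z * log2 lam.
  rewrite big_seq_cond [RHS]big_seq_cond; apply: eq_bigr => z /andP[zs _].
  rewrite /xlog2; case: (hroot z zs) => ->; first by rewrite eqxx mul0r.
  by rewrite /= (gt_eqF lam0).
by rewrite -mulr_suml Re_sum hsum mul1r.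
Qed.

HB.instance Definition _ (aT : finType) (rT : finZmodType) := GRing.Zmodule.on {ffun aT -> rT}.
HB.instance Definition _ (A B : finZmodType) := GRing.Zmodule.on (A * B)%type.

Section Abstract.
Variables (G H : finZmodType) (p : G -> H -> bool).
Hypothesis p00 : p 0 0.
Hypothesis pB : forall x y c e, p x c -> p y e -> p (x - y) (c - e).

Definition Kc := #|[set x | p x 0]|.
Definition Lc := #|[set c | p 0 c]|.
Definition Ac x := #|[set c | p x c]|.
Definition Nc x y := #|[set c | p x c && p y c]|.

Lemma pN c : p 0 c -> p 0 (- c).
Proof. by move=> h; have := pB p00 h; rewrite subr0 sub0r. Qed.

Lemma pD x y c e : p x c -> p y e -> p (x + y) (c + e).
Proof.
move=> h1 h2; have h3 : p (- y) (- e) by have := pB p00 h2; rewrite !sub0r.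
by have := pB h1 h3; rewrite !opprK.
Qed.

Lemma Ac_eq x : Ac x = 0%N \/ Ac x = Lc.
Proof.
case: (pickP (fun c => p x c)) => [c0 hc0|h0]; last first.
  by left; apply/eqP; rewrite /Ac cards_eq0; apply/eqP/setP => c; rewrite !inE h0.
right; rewrite /Ac /Lc.
rewrite -(card_imset _ (subIr c0)) /=.
apply: eq_card => e; rewrite !inE; apply/imsetP/idP.
  case=> c; rewrite inE => hc ->.
  by have := pB hc hc0; rewrite subrr.
move=> he; exists (e + c0); last by rewrite addrK.
by rewrite inE; have := pD he hc0; rewrite add0r.
Qed.

Lemma Nc_eq x y : Nc x y = if p (x - y) 0 then Ac x else 0%N.
Proof.
rewrite /Nc /Ac; case: ifP => hxy.
  apply: eq_card => c; rewrite !inE; apply/andP/idP => [[]//|hc].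
  by split=> //; have := pB hc hxy; rewrite subr0 opprB addrC subrK.
apply/eqP; rewrite cards_eq0; apply/eqP/setP => c; rewrite !inE.
apply/negP => /andP[h1 h2]; have := pB h1 h2; rewrite subrr hxy.
by [].
Qed.

Lemma Ac_shift x y : p (x - y) 0 -> Ac y = Ac x.
Proof.
move=> hxy; rewrite /Ac; apply: eq_card => c; rewrite !inE.
apply/idP/idP => hc.
  by have := pD hc hxy; rewrite addr0 addrC subrK.
by have := pB hc hxy; rewrite subr0 opprB addrC subrK.
Qed.

Lemma Kc_shift x : #|[set y | p (x - y) 0]| = Kc.
Proof.
have inj : injective (fun w : G => x - w) by move=> a b /= /addrI /oppr_inj.
rewrite /Kc -(card_imset _ inj); apply: eq_card => z.
rewrite inE; apply/idP/imsetP.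
  by move=> hz; exists (x - z); rewrite ?inE // opprB addrC subrK.
by case=> w; rewrite inE => hw ->; rewrite opprB addrC subrK.
Qed.

Lemma Nc_sq x z : \sum_y (Nc x y * Nc y z)%N = (Kc * Lc * Nc x z)%N.
Proof.
rewrite (Nc_eq x z).
transitivity (\sum_(y | p (x - y)%R 0) (if p (x - z)%R 0 then (Ac x * Ac x)%N else 0%N)).
  rewrite [in RHS]big_mkcond; apply: eq_bigr => y _.
  rewrite !Nc_eq; case: ifP => hxy; last by rewrite mul0n.
  rewrite (Ac_shift hxy).
  have -> : p (y - z) 0 = p (x - z) 0.
    apply/idP/idP => h.
      by have := pD hxy h; rewrite addr0 addrA subrK.
    by have := pB h hxy; rewrite subrr opprB addrC addrA subrK.
  by case: ifP; rewrite ?muln0.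
rewrite sum_nat_const -/(Kc_shift x) -(Kc_shift x).
have -> : #|[pred y | p (x - y) 0]| = #|[set y | p (x - y) 0]|.
  by apply: eq_card => y; rewrite !inE.
case: ifP => _; last by rewrite !muln0.
by case: (Ac_eq x) => ->; rewrite ?muln0 // mulnA.
Qed.

Lemma Nc_tr : \sum_x Nc x x = #|[set xc : G * H | p xc.1 xc.2]|.
Proof.
rewrite -sum1_card.
rewrite (eq_bigl (fun xc : G * H => p xc.1 xc.2)); last by move=> xc; rewrite inE.
rewrite -(pair_big_dep xpredT (fun x c => p x c) (fun _ _ => 1%N)) /=.
apply: eq_bigr => x _; rewrite /Nc sum1_card; apply: eq_card => c.
by rewrite !inE andbb.
Qed.

Lemma Kc_gt0 : (0 < Kc)%N.
Proof. by apply/card_gt0P; exists 0; rewrite inE. Qed.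
Lemma Lc_gt0 : (0 < Lc)%N.
Proof. by apply/card_gt0P; exists 0; rewrite inE. Qed.

End Abstract.

HB.instance Definition _ (aT : finType) (rT : finZmodType) := GRing.Zmodule.on {ffun aT -> rT}.

Section Glue.
Variables (T Q : finType) (X : {set T}).

Lemma glueL (x : cfg Q X) (c : cfg Q (~: X)) (i : {i | i \in X}) :
  glue x c (val i) = x i.
Proof.
rewrite /glue ffunE; destruct (boolP (val i \in X)) as [h|h]; first by congr (x _); apply: val_inj.
by case/negP: h; exact: (valP i).
Qed.

Lemma glueR (x : cfg Q X) (c : cfg Q (~: X)) (j : {j | j \in ~: X}) :
  glue x c (val j) = c j.
Proof.
rewrite /glue ffunE; destruct (boolP (val j \in X)) as [h|h]; last by congr (c _); apply: val_inj.
by have := valP j; rewrite inE h.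
Qed.

Definition resL (s : {ffun T -> Q}) : cfg Q X := [ffun i => s (val i)].
Definition resR (s : {ffun T -> Q}) : cfg Q (~: X) := [ffun i => s (val i)].

Lemma glue_res s : glue (resL s) (resR s) = s.
Proof.
apply/ffunP => k; rewrite /glue ffunE.
case: {-}_ / (boolP (k \in X)) => h; by rewrite ffunE.
Qed.

Lemma resL_glue x c : resL (glue x c) = x.
Proof. by apply/ffunP => i; rewrite ffunE glueL. Qed.
Lemma resR_glue x c : resR (glue x c) = c.
Proof. by apply/ffunP => i; rewrite ffunE glueR. Qed.

Lemma card_glue (P : pred {ffun T -> Q}) :
  #|[set xc : cfg Q X * cfg Q (~: X) | P (glue xc.1 xc.2)]| = #|[set s | P s]|.
Proof.
have gK : cancel (fun xc : cfg Q X * cfg Q (~: X) => glue xc.1 xc.2)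
                 (fun s => (resL s, resR s)).
  by case=> x c /=; rewrite resL_glue resR_glue.
rewrite -(card_imset _ (can_inj gK)); apply: eq_card => s; rewrite inE.
apply/imsetP/idP; first by case=> xc; rewrite inE => h ->.
by move=> h; exists (resL s, resR s); rewrite ?inE /= glue_res.
Qed.

End Glue.

Section GlueZ.
Variables (T : finType) (Q : finZmodType) (X : {set T}).


Lemma glueB (x y : cfg Q X) (c e : cfg Q (~: X)) :
  glue (x - y) (c - e) = glue x c - glue y e.
Proof.
apply/ffunP => k; rewrite /glue !ffunE.
by case: {-}_ / (boolP (k \in X)) => h; rewrite !ffunE.
Qed.

Definition zeroOut (s : {ffun T -> Q}) := [forall k, (k \notin X) ==> (s k == 0)].
Definition zeroIn (s : {ffun T -> Q}) := [forall k, (k \in X) ==> (s k == 0)].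

Lemma zeroOut_glue (x : cfg Q X) (c : cfg Q (~: X)) : zeroOut (glue x c) = (c == 0).
Proof.
apply/forallP/eqP => [h|->].
  apply/ffunP => j; rewrite ffunE -(glueR x).
  by have := h (val j); rewrite -in_setC (valP j) => /eqP.
move=> k; apply/implyP => hk; rewrite /glue ffunE.
by case: {-}_ / (boolP (k \in X)) => hh; rewrite ?ffunE //; by rewrite hh in hk.
Qed.

Lemma zeroIn_glue (x : cfg Q X) (c : cfg Q (~: X)) : zeroIn (glue x c) = (x == 0).
Proof.
apply/forallP/eqP => [h|->].
  apply/ffunP => j; rewrite ffunE -(glueL _ c).
  by have := h (val j); rewrite (valP j) => /eqP.
move=> k; apply/implyP => hk; rewrite /glue ffunE.
by case: {-}_ / (boolP (k \in X)) => hh; rewrite ?ffunE //; exfalso; exact: (negP hh hk).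
Qed.

Lemma card_pairR (A B : finType) (q : pred A) (b0 : B) :
  #|[set xc : A * B | q xc.1 && (xc.2 == b0)]| = #|[set x | q x]|.
Proof.
have inj : injective (fun x : A => (x, b0)) by move=> x y [].
rewrite -[RHS](card_imset _ inj).
apply: eq_card => -[x b]; rewrite inE /=; apply/andP/imsetP.
  by case=> hx /eqP ->; exists x; rewrite ?inE.
by case=> y; rewrite inE => hy [-> ->].
Qed.

Lemma card_pairL (A B : finType) (q : pred B) (a0 : A) :
  #|[set xc : A * B | (xc.1 == a0) && q xc.2]| = #|[set x | q x]|.
Proof.
have inj : injective (fun x : B => (a0, x)) by move=> x y [].
rewrite -[RHS](card_imset _ inj).
apply: eq_card => -[a x]; rewrite inE /=; apply/andP/imsetP.
  by case=> /eqP -> hx; exists x; rewrite ?inE.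
by case=> y; rewrite inE => hy [-> ->].
Qed.

Lemma card_K (P : pred {ffun T -> Q}) :
  #|[set x : cfg Q X | P (glue x 0)]| = #|[set s | P s && zeroOut s]|.
Proof.
rewrite -(card_glue X) -(card_pairR _ (0 : cfg Q (~: X))); apply: eq_card => -[x c]; rewrite !inE /=.
rewrite zeroOut_glue; by case: eqP => [->|]; rewrite ?andbF ?andbT.
Qed.

Lemma card_L (P : pred {ffun T -> Q}) :
  #|[set c : cfg Q (~: X) | P (glue 0 c)]| = #|[set s | P s && zeroIn s]|.
Proof.
rewrite -(card_glue X) -(card_pairL _ (0 : cfg Q X)); apply: eq_card => -[x c]; rewrite !inE /=.
rewrite zeroIn_glue; by case: eqP => [->|]; rewrite ?andbF ?andbT.
Qed.

End GlueZ.

Section Concrete.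
Variables (R : realType) (n d : nat).

Definition inV (s : {ffun Sys n -> 'F_d}) : bool := Cpart s == Mn d n *m Apart s.

Lemma ApartB (s t : {ffun Sys n -> 'F_d}) : Apart (s - t) = Apart s - Apart t.
Proof. by apply/matrixP => i j; rewrite !mxE !ffunE. Qed.
Lemma CpartB (s t : {ffun Sys n -> 'F_d}) : Cpart (s - t) = Cpart s - Cpart t.
Proof. by apply/matrixP => i j; rewrite !mxE !ffunE. Qed.
Lemma Apart0 : Apart (0 : {ffun Sys n -> 'F_d}) = 0.
Proof. by apply/matrixP => i j; rewrite !mxE !ffunE. Qed.
Lemma Cpart0 : Cpart (0 : {ffun Sys n -> 'F_d}) = 0.
Proof. by apply/matrixP => i j; rewrite !mxE !ffunE. Qed.

Lemma inV0 : inV 0.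
Proof. by rewrite /inV Apart0 Cpart0 mulmx0. Qed.

Lemma inVB s t : inV s -> inV t -> inV (s - t).
Proof. by rewrite /inV ApartB CpartB mulmxBr => /eqP -> /eqP ->. Qed.

Definition kap : R := (Num.sqrt (#|'cV['F_d]_n|%:R : R))^-1.

Lemma choi_amp_U s :
  choi_amp (Udn R d n) s = kap%:C%C * (inV s)%:R.
Proof.
rewrite /choi_amp (bigD1 (Apart s)) //= big1 => [|a' ne].
  by rewrite addr0 /phiplus eqxx mulr1 /Udn mxE !enum_rankK mulrC.
by rewrite /phiplus eq_sym (negbTE ne) /= !mulr0.
Qed.

Lemma conj_real (x : R) : ((x%:C)^*)%C = x%:C%C.
Proof. by rewrite /= oppr0. Qed.

Lemma kap2 : kap * kap = (#|'cV['F_d]_n|%:R)^-1.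
Proof.
rewrite /kap -invfM -expr2 sqr_sqrtr //.
Qed.

Lemma choi_U s t :
  choi (Udn R d n) s t = ((#|'cV['F_d]_n|%:R : R)^-1)%:C%C * (inV s && inV t)%:R.
Proof.
rewrite /choi !choi_amp_U.
have -> : kap%:C%C * (inV t)%:R = (kap * (inV t)%:R)%:C%C by rewrite rmorphM rmorph_nat.
rewrite conj_real rmorphM rmorph_nat -kap2 rmorphM.
by case: (inV s); case: (inV t); rewrite /= ?mulr1 ?mulr0 ?mul0r.
Qed.

End Concrete.

Section Red.
Variables (R : realType) (n d : nat) (X : {set Sys n}).

Definition pX (x : cfg 'F_d X) (c : cfg 'F_d (~: X)) : bool := inV (glue x c).

Lemma glue00 : glue (0 : cfg 'F_d X) (0 : cfg 'F_d (~: X)) = 0.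
Proof. by have := glueB (0 : cfg 'F_d X) 0 (0 : cfg 'F_d (~: X)) 0; rewrite !subr0 subrr. Qed.

Lemma pX00 : pX 0 0.
Proof. by rewrite /pX glue00 inV0. Qed.

Lemma pXB x y c e : pX x c -> pX y e -> pX (x - y) (c - e).
Proof. by rewrite /pX glueB; apply: inVB. Qed.

Definition Bmx : 'M[R[i]]_#|cfg 'F_d X| :=
  \matrix_(i, j) (Nc pX (enum_val i) (enum_val j))%:R.

Lemma sum_nat_C (T : finType) (b : pred T) :
  \sum_(c : T) ((b c)%:R : R[i]) = (#|[set c | b c]|)%:R.
Proof.
rewrite (eq_bigr (fun c => if b c then 1 else 0)) => [|c _]; last by case: (b c).
rewrite -big_mkcond sumr_const; congr (_ *+ _); apply: eq_card => c; by rewrite inE.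
Qed.

Lemma reduced_U :
  reduced (choi (Udn R d n)) X = ((#|'cV['F_d]_n|%:R : R)^-1)%:C%C *: Bmx.
Proof.
apply/matrixP => i j; rewrite !mxE.
under eq_bigr do rewrite choi_U.
rewrite -mulr_sumr sum_nat_C.
by [].
Qed.

End Red.

Section Emb.
Variables (n d : nat).

Definition emb (a : 'cV['F_d]_n) : {ffun Sys n -> 'F_d} :=
  [ffun k => match k with inl i => a i 0 | inr j => (Mn d n *m a) j 0 end].

Lemma Apart_emb a : Apart (emb a) = a.
Proof. by apply/matrixP => i j; rewrite !mxE ffunE (ord1 j). Qed.

Lemma emb_inV a : inV (emb a).
Proof.
rewrite /inV Apart_emb; apply/eqP/matrixP => i j; rewrite mxE ffunE (ord1 j).
by [].
Qed.

Lemma emb_Apart s : inV s -> emb (Apart s) = s.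
Proof.
move=> /eqP h; apply/ffunP => -[i|j]; rewrite ffunE.
  by rewrite mxE.
by rewrite -h mxE.
Qed.

Lemma card_V_pred (Z : pred {ffun Sys n -> 'F_d}) :
  #|[set s | inV s && Z s]| = #|[set a | Z (emb a)]|.
Proof.
rewrite -(card_imset _ (can_inj Apart_emb)); apply: eq_card => s; rewrite inE.
apply/andP/imsetP.
  by case=> hs hz; exists (Apart s); rewrite ?inE ?emb_Apart.
by case=> a; rewrite inE => hz ->; split; rewrite ?emb_inV.
Qed.

Lemma card_V : #|[set s : {ffun Sys n -> 'F_d} | inV s]| = #|'cV['F_d]_n|.
Proof.
have := card_V_pred xpredT; rewrite /=.
rewrite (eq_card (B := [set s | inV s])) => [->|s]; last by rewrite !inE andbT.
by apply: eq_card => a; rewrite inE.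
Qed.

End Emb.

Section Ent.
Variables (R : realType) (n d : nat) (X : {set Sys n}).

Lemma Bmx_sq : Bmx R d X *m Bmx R d X =
   ((Kc (@pX n d X) * Lc (@pX n d X))%:R) *: Bmx R d X.
Proof.
apply/matrixP => i j; rewrite !mxE.
rewrite (reindex (@enum_rank _)) /=; last by apply: onW_bij; apply: enum_rank_bij.
under eq_bigr do rewrite !mxE enum_rankK -natrM.
rewrite -natr_sum (Nc_sq (pX00 d X) (@pXB n d X)) natrM.
by [].
Qed.

Lemma Bmx_tr : \tr (Bmx R d X) = (#|'cV['F_d]_n|)%:R.
Proof.
rewrite /mxtrace (reindex (@enum_rank _)) /=; last by apply: onW_bij; apply: enum_rank_bij.
under eq_bigr do rewrite !mxE enum_rankK.
rewrite -natr_sum Nc_tr.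
have := card_glue X (fun s : {ffun Sys n -> 'F_d} => inV s).
rewrite /pX => ->.
by rewrite card_V.
Qed.

Lemma entropy_U : entropy (choi (Udn R d n)) X =
  - log2 ((#|'cV['F_d]_n|%:R : R)^-1 * (Kc (@pX n d X) * Lc (@pX n d X))%:R).
Proof.
have N0 : (0 < #|'cV['F_d]_n|)%N by apply/card_gt0P; exists 0.
have hC : forall (x : R) (m : nat), (x * m%:R)%:C%C = x%:C%C * m%:R.
  by move=> x m; rewrite rmorphM rmorph_nat.
rewrite /entropy reduced_U; apply: vN_flat.
- rewrite mulr_gt0 // ?invr_gt0 ?ltr0n // muln_gt0.
  by rewrite (Kc_gt0 (pX00 d X)) (Lc_gt0 (pX00 d X)).
  rewrite -scalemxAl -scalemxAr Bmx_sq !scalerA hC.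
  by rewrite mulrAC.
- rewrite mxtraceZ Bmx_tr -hC mulVf ?rmorph1 //.
  by rewrite pnatr_eq0 -lt0n.
Qed.

End Ent.

Section Cnt.
Variables (n d : nat).

Definition cnt (P Q : pred 'I_n) :=
  #|[set a : 'cV['F_d]_n | [forall k, P k ==> (a k 0 == 0)] &&
                           [forall k, Q k ==> ((Mn d n *m a) k 0 == 0)]]|.

Lemma cnt_ext (P P' Q Q' : pred 'I_n) : P =1 P' -> Q =1 Q' -> cnt P Q = cnt P' Q'.
Proof.
move=> hP hQ; apply: eq_card => a; rewrite !inE.
congr (_ && _); apply: eq_forallb => k; by rewrite ?hP ?hQ.
Qed.

Lemma zeroIn_emb (X : {set Sys n}) (a : 'cV['F_d]_n) :
  zeroIn X (emb a) = [forall k, (inl k \in X) ==> (a k 0 == 0)] &&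
                     [forall k, (inr k \in X) ==> ((Mn d n *m a) k 0 == 0)].
Proof.
apply/forallP/andP => [h|[/forallP h1 /forallP h2]].
  split; apply/forallP => k.
    by have := h (inl k); rewrite ffunE.
  by have := h (inr k); rewrite ffunE.
by case=> k; rewrite ffunE; [apply: h1 | apply: h2].
Qed.

Lemma zeroOut_emb (X : {set Sys n}) (a : 'cV['F_d]_n) :
  zeroOut X (emb a) = [forall k, (inl k \notin X) ==> (a k 0 == 0)] &&
                     [forall k, (inr k \notin X) ==> ((Mn d n *m a) k 0 == 0)].
Proof.
apply/forallP/andP => [h|[/forallP h1 /forallP h2]].
  split; apply/forallP => k.
    by have := h (inl k); rewrite ffunE.
  by have := h (inr k); rewrite ffunE.
by case=> k; rewrite ffunE; [apply: h1 | apply: h2].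
Qed.

Lemma Kc_cnt (X : {set Sys n}) :
  Kc (@pX n d X) = cnt (fun k => inl k \notin X) (fun k => inr k \notin X).
Proof.
rewrite /Kc /pX (card_K X (fun s : {ffun Sys n -> 'F_d} => inV s)) card_V_pred.
by apply: eq_card => a; rewrite !inE zeroOut_emb.
Qed.

Lemma Lc_cnt (X : {set Sys n}) :
  Lc (@pX n d X) = cnt (fun k => inl k \in X) (fun k => inr k \in X).
Proof.
rewrite /Lc /pX (card_L X (fun s : {ffun Sys n -> 'F_d} => inV s)) card_V_pred.
by apply: eq_card => a; rewrite !inE zeroIn_emb.
Qed.

End Cnt.

Section Alg.
Variables (n d : nat).
Hypothesis hd : prime d.
Hypothesis hdn : (n.+1 < d)%N.

Lemma natF_neq0 m : (0 < m)%N -> (m < d)%N -> (m%:R : 'F_d) != 0.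
Proof.
move=> m0 md; apply/eqP => h; have := val_Fp_nat hd m.
by rewrite h /= modn_small // => e; move: m0; rewrite -e.
Qed.

Lemma MnE (a : 'cV['F_d]_n) k : (Mn d n *m a) k 0 = a k 0 + \sum_l a l 0.
Proof.
rewrite mxE (eq_bigr (fun l => (k == l)%:R * a l 0 + a l 0)) => [|l _]; last first.
  by rewrite !mxE mulrDl mul1r.
rewrite big_split /=; congr (_ + _).
rewrite (bigD1 k) //= eqxx mul1r big1 ?addr0 // => l lk.
by rewrite eq_sym (negbTE lk) mul0r.
Qed.

Definition minv (c : 'cV['F_d]_n) : 'cV['F_d]_n :=
  \col_k (c k 0 - (n.+1%:R)^-1 * \sum_l c l 0).

Lemma Mn_minv c : Mn d n *m minv c = c.
Proof.
have h1 : (n.+1%:R : 'F_d) != 0 by apply: natF_neq0; rewrite // ltnW.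
apply/matrixP => k j; rewrite (ord1 j) MnE !mxE.
rewrite [X in _ + X](eq_bigr (fun l => c l 0 - (n.+1%:R)^-1 * \sum_l c l 0)); last by move=> l _; rewrite mxE.
rewrite sumrB sumr_const card_ord.
set s := \sum_l c l 0; set t := (n.+1%:R)^-1 * s.
have : t * n.+1%:R = s by rewrite /t mulrAC mulVf // mul1r.
rewrite -mulr_natr mulrS => <-.
ring.
Qed.

Lemma Mn_inj : injective (fun a : 'cV['F_d]_n => Mn d n *m a).
Proof.
have h1 : (n.+1%:R : 'F_d) != 0 by apply: natF_neq0; rewrite // ltnW.
move=> a b /= e; apply/eqP; rewrite -subr_eq0; apply/eqP.
have hx : Mn d n *m (a - b) = 0 by rewrite mulmxBr e subrr.
set x := a - b in hx *.
have hk k : x k 0 = - \sum_l x l 0.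
  by apply/eqP; rewrite -addr_eq0 -MnE hx mxE.
have hs : \sum_l x l 0 = 0.
  have : \sum_l x l 0 = - (\sum_l x l 0) *+ n.
    by rewrite {1}(eq_bigr _ (fun l _ => hk l)) sumr_const card_ord.
  move=> /eqP; rewrite -subr_eq0 mulNrn opprK addrC -mulrSr -mulr_natr mulf_eq0.
  by rewrite (negbTE h1) orbF => /eqP.
by apply/matrixP => k j; rewrite (ord1 j) hk hs oppr0 mxE.
Qed.

Lemma minvK c : minv (Mn d n *m c) = c.
Proof. by apply: Mn_inj; rewrite /= Mn_minv. Qed.

End Alg.

Lemma card_ker (G H : finZmodType) (f : G -> H) :
  (forall x y, f (x - y) = f x - f y) -> (forall h, exists x, f x = h) ->
  (#|[set x | f x == 0%R]| * #|H|)%N = #|G|.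
Proof.
move=> fB fS.
have f0 : f 0 = 0 by have := fB 0 0; rewrite subrr => ->; rewrite subrr.
have fN y : f (- y) = - f y by rewrite -sub0r fB f0 sub0r.
have fD x y : f (x + y) = f x + f y by rewrite -{1}[y]opprK fB fN opprK.
have fiber h : #|[set x | f x == h]| = #|[set x | f x == 0]|.
  have [x0 hx0] := fS h.
  have inj : injective (fun x : G => x + x0) by apply: addIr.
  rewrite -[RHS](card_imset _ inj); apply: eq_card => x; rewrite [in LHS]inE.
  apply/idP/imsetP.
    move=> /eqP hx; exists (x - x0); last by rewrite subrK.
    by rewrite inE fB hx hx0 subrr.
  case=> y; rewrite inE => /eqP hy ->.
  by rewrite fD hy add0r hx0.
rewrite mulnC -sum_nat_const -[#|G|]sum1_card (partition_big f xpredT) //=.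
apply: eq_bigr => h _.
rewrite sum1_card -(fiber h); apply: eq_card => x; by rewrite !inE.
Qed.

Section Counts.
Variables (n d : nat).
Hypothesis hd : prime d.
Hypothesis hdn : (n.+1 < d)%N.

Definition ev (i : 'I_n) (t : 'F_d) : 'cV['F_d]_n := \col_k (if k == i then t else 0).

Lemma ev_sum i t : \sum_l (ev i t) l 0 = t.
Proof.
rewrite (bigD1 i) //= big1 => [|l li]; first by rewrite mxE eqxx addr0.
by rewrite mxE (negbTE li).
Qed.

Lemma card_cV : #|'cV['F_d]_n| = (d ^ n)%N.
Proof. by rewrite card_mx card_Fp // muln1. Qed.

Lemma card_single j :
  #|[set c : 'cV['F_d]_n | [forall k, (k != j) ==> (c k 0 == 0)]]| = d.
Proof.
have inj : injective (ev j).
  by move=> t u /matrixP /(_ j 0); rewrite !mxE eqxx.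
transitivity #|[set: 'F_d]|; last by rewrite cardsT card_Fp.
rewrite -(card_imset _ inj); apply: eq_card => c.
rewrite inE; apply/forallP/imsetP => [h|[t _ ->] k].
  exists (c j 0) => //; apply/matrixP => k l; rewrite (ord1 l) mxE.
  by case: eqP => [->//|/eqP kj]; have := h k; rewrite kj => /eqP.
by rewrite mxE; case: eqP.
Qed.

Lemma cnt_swap (P Q : pred 'I_n) :
  @cnt n d P Q = #|[set c : 'cV['F_d]_n | [forall k, P k ==> (minv c k 0 == 0)] &&
                                      [forall k, Q k ==> (c k 0 == 0)]]|.
Proof.
rewrite /cnt -(card_imset _ (@Mn_inj n d hd hdn)); apply: eq_card => c.
rewrite inE; apply/imsetP/idP.
  by case=> a; rewrite inE => h ->; rewrite minvK.
by move=> h; exists (minv c); rewrite ?inE ?Mn_minv.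
Qed.

Lemma cnt1 (P Q : pred 'I_n) :
  (forall a : 'cV['F_d]_n, (forall k, P k -> a k 0 = 0) ->
                           (forall k, Q k -> (Mn d n *m a) k 0 = 0) -> a = 0) ->
  @cnt n d P Q = 1%N.
Proof.
move=> h; rewrite /cnt; transitivity #|[set (0 : 'cV['F_d]_n)]|; last exact: cards1.
apply: eq_card => a.
rewrite !inE; apply/andP/eqP => [[/forallP h1 /forallP h2]|->].
  apply: h => k hk; first by have := h1 k; rewrite hk => /eqP.
  by have := h2 k; rewrite hk => /eqP.
by rewrite mulmx0; split; apply/forallP => k; rewrite mxE eqxx implybT.
Qed.

Lemma cnt_allA Q : @cnt n d xpredT Q = 1%N.
Proof.
by apply: cnt1 => a h _; apply/matrixP => k l; rewrite (ord1 l) h // mxE.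
Qed.

Lemma cnt_allC P : @cnt n d P xpredT = 1%N.
Proof.
apply: cnt1 => a _ h; apply: (@Mn_inj n d hd hdn) => /=; rewrite mulmx0.
by apply/matrixP => k l; rewrite (ord1 l) h // mxE.
Qed.

Lemma cnt_none : @cnt n d pred0 pred0 = #|'cV['F_d]_n|.
Proof. by rewrite /cnt; apply: eq_card => a; rewrite !inE; apply/andP; split; apply/forallP. Qed.

Lemma cnt_notA i : @cnt n d (fun k => k != i) pred0 = d.
Proof.
rewrite /cnt; transitivity #|[set c : 'cV['F_d]_n | [forall k, (k != i) ==> (c k 0 == 0)]]|;
  last exact: card_single.
apply: eq_card => a; rewrite !inE.
by rewrite [X in _ && X](_ : _ = true) ?andbT //; apply/forallP.
Qed.

Lemma cnt_notC j : @cnt n d pred0 (fun k => k != j) = d.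
Proof.
rewrite cnt_swap; transitivity #|[set c : 'cV['F_d]_n | [forall k, (k != j) ==> (c k 0 == 0)]]|;
  last exact: card_single.
apply: eq_card => a; rewrite !inE.
by rewrite [X in X && _](_ : _ = true) //; apply/forallP.
Qed.

Lemma cnt_A i : (@cnt n d (fun k => k == i) pred0 * d)%N = (d ^ n)%N.
Proof.
rewrite -card_cV; have e : #|'F_d| = d := card_Fp hd.
rewrite -[X in (_ * X)%N = _]e.
rewrite -(@card_ker _ _ (fun a : 'cV['F_d]_n => a i 0)).
- congr (_ * _)%N; apply: eq_card => a; rewrite !inE.
  apply/andP/idP => [[/forallP h _]|h]; first by have := h i; rewrite eqxx.
  split; apply/forallP => k //; apply/implyP => /eqP -> //.
- by move=> x y; rewrite !mxE.
- by move=> t; exists (ev i t); rewrite mxE eqxx.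
Qed.

Lemma cnt_C j : (@cnt n d pred0 (fun k => k == j) * d)%N = (d ^ n)%N.
Proof.
rewrite -card_cV; have e : #|'F_d| = d := card_Fp hd.
rewrite -[X in (_ * X)%N = _]e.
rewrite -(@card_ker _ _ (fun a : 'cV['F_d]_n => (Mn d n *m a) j 0)).
- congr (_ * _)%N; apply: eq_card => a; rewrite !inE.
  apply/andP/idP => [[_ /forallP h]|h]; first by have := h j; rewrite eqxx.
  split; apply/forallP => k //; apply/implyP => /eqP -> //.
- by move=> x y; rewrite mulmxBr !mxE.
- by move=> t; exists (minv (ev j t)); rewrite Mn_minv // mxE eqxx.
Qed.

End Counts.

Section Counts2.
Variables (n d : nat).
Hypothesis hd : prime d.
Hypothesis hdn : (n.+1 < d)%N.

Lemma other (j : 'I_n) : (1 < n)%N -> exists k : 'I_n, k != j.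
Proof.
move=> h1; have h0 : (0 < n)%N by apply: ltnW.
case: (eqVneq j (Ordinal h0)) => [->|ne]; first by exists (Ordinal h1).
by exists (Ordinal h0); rewrite eq_sym.
Qed.

Lemma Mn_ev i t k : (Mn d n *m ev i t) k 0 = (if k == i then t else 0) + t.
Proof. by rewrite MnE ev_sum mxE. Qed.

Lemma two_neq0 : (1 <= n)%N -> (2%:R : 'F_d) != 0.
Proof. by move=> h; apply: natF_neq0 => //; apply: leq_ltn_trans hdn; rewrite ltnS. Qed.

Lemma ev_eta (a : 'cV['F_d]_n) i : (forall k, k != i -> a k 0 = 0) -> a = ev i (a i 0).
Proof.
move=> h; apply/matrixP => k l; rewrite (ord1 l) mxE.
by case: eqP => [->//|/eqP ki]; rewrite h.
Qed.

Lemma ev_zero (a : 'cV['F_d]_n) i k : (forall k, k != i -> a k 0 = 0) ->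
  (Mn d n *m a) k 0 = 0 -> a = 0.
Proof.
move=> h; rewrite (ev_eta h) Mn_ev; set t := a i 0.
have hn : (1 <= n)%N := leq_ltn_trans (leq0n _) (ltn_ord i).
have tt0 : t + t = 0 -> t = 0.
  move=> e; apply/eqP; move: e => /eqP; rewrite -mulr2n -mulr_natr mulf_eq0.
  by rewrite (negbTE (two_neq0 hn)) orbF.
case: eqP => _; [rewrite -/t => /tt0 | rewrite add0r] => ->;
  by apply/matrixP => x y; rewrite !mxE; case: eqP.
Qed.

Lemma cnt_nn i j : (1 < n)%N -> @cnt n d (fun k => k != i) (fun k => k != j) = 1%N.
Proof.
move=> h1; have [k kj] := other j h1.
by apply: cnt1 => // a hA hC; apply: (ev_zero (k := k) hA); apply: hC.
Qed.

Lemma cnt_ne i j : @cnt n d (fun k => k != i) (fun k => k == j) = 1%N.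
Proof.
by apply: cnt1 => // a hA hC; apply: (ev_zero (k := j) hA); apply: hC.
Qed.

Lemma cnt_en i j : @cnt n d (fun k => k == i) (fun k => k != j) = 1%N.
Proof.
apply: cnt1 => // a hA hC.
have ai : a i 0 = 0 by apply: hA.
set s := \sum_l a l 0.
have hk k : k != j -> a k 0 = - s.
  by move=> kj; apply/eqP; rewrite -addr_eq0 -MnE hC.
case: (eqVneq i j) => [eij|nij].
  subst j.
  have hn : (0 < n)%N := leq_ltn_trans (leq0n _) (ltn_ord i).
  have hs : s *+ n = 0.
    have : s = - s *+ n.-1.
      rewrite {1}/s (bigD1 i) //= ai add0r (eq_bigr _ (fun l h => hk l h)).
      by rewrite sumr_const cardC1 card_ord mulNrn.
    move=> /eqP; rewrite -subr_eq0 mulNrn opprK -mulrS prednK // => /eqP.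
    done.
  have s0 : s = 0.
    move: hs => /eqP; rewrite -mulr_natr mulf_eq0 (negbTE (natF_neq0 hd hn _)) ?orbF.
      by move=> /eqP.
    by apply: ltn_trans hdn.
  apply/matrixP => k l; rewrite (ord1 l) mxE.
  by case: (eqVneq k i) => [->//|ki]; rewrite hk // s0 oppr0.
have s0 : s = 0 by apply: oppr_inj; rewrite -(hk i nij) ai oppr0.
have hA' k : k != j -> a k 0 = 0 by move=> kj; rewrite hk // s0 oppr0.
have : s = a j 0 by rewrite /s [in LHS](ev_eta hA') ev_sum.
move=> e; rewrite (ev_eta hA') -e s0.
by apply/matrixP => x y; rewrite !mxE; case: eqP.
Qed.

End Counts2.

Section Counts3.
Variables (n d : nat).
Hypothesis hd : prime d.
Hypothesis hdn : (n.+1 < d)%N.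

Lemma ev_add i t u : ev i t + ev i u = ev i (t + u) :> 'cV['F_d]_n.
Proof. by apply/matrixP => x y; rewrite !mxE; case: eqP; rewrite ?addr0. Qed.

Lemma cnt_AC i j : (1 < n)%N ->
  (@cnt n d (fun k => k == i) (fun k => k == j) * (d * d))%N = (d ^ n)%N.
Proof.
move=> h1.
rewrite -card_cV //; have e : #|'F_d| = d := card_Fp hd.
rewrite -[X in (_ * (X * _))%N = _]e -[X in (_ * (_ * X))%N = _]e -card_prod.
rewrite -(@card_ker _ _ (fun a : 'cV['F_d]_n => (a i 0, (Mn d n *m a) j 0))).
- congr (_ * _)%N; apply: eq_card => a; rewrite !inE /= xpair_eqE.
  apply/andP/andP => [[/forallP h /forallP h']|[h h']].
    by have := h i; have := h' j; rewrite !eqxx.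
  by split; apply/forallP => k; apply/implyP => /eqP ->.
- by move=> x y; rewrite mulmxBr !mxE.
case=> u v.
have two := two_neq0 hd hdn (ltnW h1).
case: (eqVneq i j) => [<-|nij].
  have [k ki] := other i h1.
  exists (ev i u + ev k (v - 2%:R * u)); congr (_, _).
    by rewrite !mxE eqxx eq_sym (negbTE ki) addr0.
  rewrite mulmxDr mxE !Mn_ev eqxx eq_sym (negbTE ki) add0r.
  ring.
exists (ev i u + ev j ((v - u) / 2%:R)); congr (_, _).
  by rewrite !mxE eqxx (negbTE nij) addr0.
rewrite mulmxDr mxE !Mn_ev eqxx eq_sym (negbTE nij) add0r.
field.
by [].
Qed.

End Counts3.

Lemma Udn_unitary (R : realType) (n d : nat) :
  prime d -> (n.+1 < d)%N -> Udn R d n \is unitarymx.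
Proof.
move=> hd hdn; apply/unitarymxP/matrixP => y y'.
rewrite !mxE (reindex (@enum_rank _)) /=; last by apply: onW_bij; apply: enum_rank_bij.
set a0 := minv (enum_val y).
rewrite (bigD1 (a0 : 'cV['F_d]_n)) //= big1 => [|a ne].
  rewrite !mxE !enum_rankK /a0 Mn_minv // eqxx mul1r conjC_nat addr0.
  by rewrite (inj_eq enum_val_inj) eq_sym.
rewrite !mxE !enum_rankK; case: eqP => [e|]; last by rewrite mul0r.
by case/eqP: ne; rewrite /a0 e minvK.
Qed.

Lemma log2M (R : realType) (x y : R) : 0 < x -> 0 < y -> log2 (x * y) = log2 x + log2 y.
Proof. by move=> hx hy; rewrite /log2 lnM ?posrE // mulrDl. Qed.

Lemma log2V (R : realType) (x : R) : 0 < x -> log2 (x^-1) = - log2 x.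
Proof. by move=> hx; rewrite /log2 lnV ?posrE // mulNr. Qed.

Lemma log2_1 (R : realType) : log2 (1 : R) = 0.
Proof. by rewrite /log2 ln1 mul0r. Qed.

Lemma log_form (R : realType) (N K L : nat) : (0 < N)%N -> (0 < K)%N -> (0 < L)%N ->
  - log2 ((N%:R : R)^-1 * (K * L)%:R) = log2 (N%:R : R) - log2 (K%:R : R) - log2 (L%:R : R).
Proof.
move=> hN hK hL.
rewrite log2M ?invr_gt0 ?ltr0n ?muln_gt0 ?hK // natrM log2M ?ltr0n // log2V ?ltr0n //.
by rewrite !opprD opprK addrA.
Qed.

Lemma log_rel (R : realType) (c N dd : nat) : (0 < N)%N -> (0 < dd)%N -> (c * dd = N)%N ->
  log2 (c%:R : R) = log2 (N%:R : R) - log2 (dd%:R : R).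
Proof.
move=> hN hd e.
have hc : (0 < c)%N by move: hN; rewrite -e muln_gt0 => /andP[].
by rewrite -e natrM log2M ?ltr0n // addrK.
Qed.

Section Mem.
Variables (n : nat).
Lemma inl_imset (P : pred 'I_n) k : (inl k \in [set (inl x : Sys n) | x : 'I_n & P x]) = P k.
Proof.
apply/imsetP/idP => [[x]|h]; first by rewrite inE => hx [->].
by exists k; rewrite ?inE.
Qed.
Lemma inr_imsetl (P : pred 'I_n) k : (inr k \in [set (inl x : Sys n) | x : 'I_n & P x]) = false.
Proof. by apply/imsetP => -[x]. Qed.
Lemma inl_imsetr (P : pred 'I_n) k : (inl k \in [set (inr x : Sys n) | x : 'I_n & P x]) = false.
Proof. by apply/imsetP => -[x]. Qed.
Lemma inr_imset (P : pred 'I_n) k : (inr k \in [set (inr x : Sys n) | x : 'I_n & P x]) = P k.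
Proof.
apply/imsetP/idP => [[x]|h]; first by rewrite inE => hx [->].
by exists k; rewrite ?inE.
Qed.
Lemma inl_set1l (i k : 'I_n) : (inl k \in [set (inl i : Sys n)]) = (k == i).
Proof. by rewrite inE. Qed.
Lemma inr_set1l (i k : 'I_n) : (inr k \in [set (inl i : Sys n)]) = false.
Proof. by rewrite inE. Qed.
Lemma inl_set1r (i k : 'I_n) : (inl k \in [set (inr i : Sys n)]) = false.
Proof. by rewrite inE. Qed.
Lemma inr_set1r (i k : 'I_n) : (inr k \in [set (inr i : Sys n)]) = (k == i).
Proof. by rewrite inE. Qed.
End Mem.

Definition memsE := (inl_imset, inr_imsetl, inl_imsetr, inr_imset, inl_set1l,
  inr_set1l, inl_set1r, inr_set1r, in_setU, orbF, orFb, orbT, orTb).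

Lemma card_cfg (Q : finType) (n : nat) (X : {set Sys n}) : #|cfg Q X| = (#|Q| ^ #|X|)%N.
Proof. by rewrite card_ffun card_sig. Qed.

Section Final.
Variables (R : realType) (n d : nat).
Hypothesis hd : prime d.
Hypothesis hdn : (n.+1 < d)%N.

Lemma ent (X : {set Sys n}) : entropy (choi (Udn R d n)) X =
  log2 (#|'cV['F_d]_n|%:R : R)
  - log2 ((@cnt n d (fun k => inl k \notin X) (fun k => inr k \notin X))%:R : R)
  - log2 ((@cnt n d (fun k => inl k \in X) (fun k => inr k \in X))%:R : R).
Proof.
rewrite entropy_U log_form.
- by rewrite Kc_cnt Lc_cnt.
- by apply/card_gt0P; exists 0.
- exact: (Kc_gt0 (pX00 d X)).
- exact: (Lc_gt0 (pX00 d X)).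
Qed.

Local Notation LN := (log2 (#|'cV['F_d]_n|%:R : R)).
Local Notation LD := (log2 (d%:R : R)).

Lemma hN : (0 < #|'cV['F_d]_n|)%N.
Proof. by apply/card_gt0P; exists 0. Qed.
Lemma hd0 : (0 < d)%N.
Proof. exact: prime_gt0. Qed.

Lemma LA i : log2 ((@cnt n d (fun k => k == i) pred0)%:R : R) = LN - LD.
Proof. by apply: log_rel hN hd0 _; rewrite cnt_A // card_cV. Qed.
Lemma LC j : log2 ((@cnt n d pred0 (fun k => k == j))%:R : R) = LN - LD.
Proof. by apply: log_rel hN hd0 _; rewrite cnt_C // card_cV. Qed.
Lemma LAC i j : (1 < n)%N ->
  log2 ((@cnt n d (fun k => k == i) (fun k => k == j))%:R : R) = LN - 2%:R * LD.
Proof.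
move=> h1; rewrite (@log_rel R _ #|'cV['F_d]_n| (d * d)) ?muln_gt0 ?hd0 ?hN //; last first.
  by rewrite cnt_AC // card_cV.
by rewrite natrM log2M ?ltr0n ?hd0 // mulr2n mulrDl mul1r.
Qed.

End Final.

Section Final2.
Variables (R : realType) (n d : nat).
Hypothesis hd : prime d.
Hypothesis hdn : (n.+1 < d)%N.
Variables (i j : 'I_n).

Local Notation LN := (log2 (#|'cV['F_d]_n|%:R : R)).
Local Notation LD := (log2 (d%:R : R)).
Local Notation S X := (entropy (choi (Udn R d n)) X).

Lemma ent' (X : {set Sys n}) (P1 Q1 P2 Q2 : pred 'I_n) :
  (forall k, (inl k \notin X) = P1 k) -> (forall k, (inr k \notin X) = Q1 k) ->
  (forall k, (inl k \in X) = P2 k) -> (forall k, (inr k \in X) = Q2 k) ->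
  S X = LN - log2 ((@cnt n d P1 Q1)%:R : R) - log2 ((@cnt n d P2 Q2)%:R : R).
Proof.
move=> h1 h2 h3 h4; rewrite ent; congr (_ - log2 _%:R - log2 _%:R); exact: cnt_ext.
Qed.

Local Notation Ai := [set (inl i : Sys n)].
Local Notation Aic := [set (inl k : Sys n) | k : 'I_n & k != i].
Local Notation Cj := [set (inr j : Sys n)].

Lemma S_Ai : S Ai = LD.
Proof.
rewrite (@ent' _ (fun k => k != i) xpredT (fun k => k == i) pred0); try by move=> k /=; rewrite !memsE.
by rewrite cnt_allC // LA // log2_1; ring.
Qed.

Lemma S_Aic : S Aic = LN - LD.
Proof.
rewrite (@ent' _ (fun k => k == i) xpredT (fun k => k != i) pred0); try by move=> k /=; rewrite !memsE ?negbK.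
by rewrite cnt_allC // cnt_notA // log2_1; ring.
Qed.

Lemma S_A : S (Ai :|: Aic) = LN.
Proof.
rewrite (@ent' _ pred0 xpredT xpredT pred0); try by move=> k /=; rewrite !memsE ?orbN.
by rewrite cnt_allC // cnt_allA // log2_1; ring.
Qed.

Lemma S_Cj : S Cj = LD.
Proof.
rewrite (@ent' _ xpredT (fun k => k != j) pred0 (fun k => k == j)); try by move=> k /=; rewrite !memsE.
by rewrite cnt_allA // LC // log2_1; ring.
Qed.

Lemma S_AiCj : (1 < n)%N -> S (Ai :|: Cj) = 2%:R * LD.
Proof.
move=> h1.
rewrite (@ent' _ (fun k => k != i) (fun k => k != j) (fun k => k == i) (fun k => k == j));
  try by move=> k /=; rewrite !memsE.
by rewrite cnt_nn // LAC // log2_1; ring.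
Qed.

Lemma S_AicCj : S (Aic :|: Cj) = LN.
Proof.
rewrite (@ent' _ (fun k => k == i) (fun k => k != j) (fun k => k != i) (fun k => k == j));
  try by move=> k /=; rewrite !memsE ?negbK.
by rewrite cnt_en // cnt_ne // log2_1; ring.
Qed.

Lemma S_all : S (Ai :|: (Aic :|: Cj)) = LN - LD.
Proof.
rewrite (@ent' _ pred0 (fun k => k != j) xpredT (fun k => k == j));
  try by move=> k /=; rewrite !memsE ?orbN ?orbA ?orbN.
by rewrite cnt_allA // cnt_notC // log2_1; ring.
Qed.

End Final2.

Lemma S_empty (R : realType) (n d : nat) (hd : prime d) :
  entropy (choi (Udn R d n)) set0 = 0.
Proof.
rewrite (@ent' R n d set0 xpredT xpredT pred0 pred0); try by move=> k /=; rewrite inE.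
by rewrite cnt_allA // cnt_none log2_1; ring.
Qed.

Unset Implicit Arguments.

Theorem proposition13 (R : realType) (n d : nat) (hn : (1 <= n)%N)
    (hd : prime d) (hdn : (n.+1 < d)%N) :
  Udn R d n \is unitarymx /\ max_I3_scrambling (Udn R d n).
Proof.
split; first exact: Udn_unitary.
move=> i j /=.
have cardAic : #|[set (inl k : Sys n) | k : 'I_n & k != i]| = n.-1.
  rewrite card_imset; last by move=> x y [].
  have -> : #|[set k | k != i]| = #|predC1 i| by apply: eq_card => k; rewrite !inE.
  by rewrite cardC1 card_ord.
have cardCjc : #|[set (inr k : Sys n) | k : 'I_n & k != j]| = n.-1.
  rewrite card_imset; last by move=> x y [].
  have -> : #|[set k | k != j]| = #|predC1 j| by apply: eq_card => k; rewrite !inE.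
  by rewrite cardC1 card_ord.
rewrite /dimsys !card_cfg cardAic cardCjc !cards1 card_Fp // /I3 /mutinf.
have hd0 : (0 < d)%N := prime_gt0 hd.
case: (ltnP 1 n) => h1.
- rewrite S_Ai // S_Aic // S_A // S_Cj // S_AiCj // S_AicCj // S_all //.
  have le : (d%:R : R) <= (d ^ n.-1)%:R.
    rewrite ler_nat; case: n h1 {hn hdn i j cardAic cardCjc} => [//|[//|m]] _ /=.
    by rewrite expnS leq_pmulr // expn_gt0 hd0.
  rewrite !(min_l le) minxx; ring.
- have n1 : n = 1%N by apply/anti_leq/andP.
  have e1 : [set (inl k : Sys n) | k : 'I_n & k != i] = set0.
    apply/setP => x; rewrite inE; apply/imsetP => -[k]; rewrite inE => /eqP[].
    have hk : (k < 1)%N by rewrite -n1 ltn_ord.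
    have hi : (i < 1)%N by rewrite -n1 ltn_ord.
    by apply: ord_inj; move: hk hi; rewrite !ltnS !leqn0 => /eqP -> /eqP ->.
  have e2 : [set (inr k : Sys n) | k : 'I_n & k != j] = set0.
    apply/setP => x; rewrite inE; apply/imsetP => -[k]; rewrite inE => /eqP[].
    have hk : (k < 1)%N by rewrite -n1 ltn_ord.
    have hi : (j < 1)%N by rewrite -n1 ltn_ord.
    by apply: ord_inj; move: hk hi; rewrite !ltnS !leqn0 => /eqP -> /eqP ->.
  have -> : n.-1 = 0%N by rewrite n1.
  rewrite e1 setU0 set0U S_empty // expn0.
  have le : (1 : R) <= d%:R by rewrite ler1n.
  rewrite !(min_r le) minxx log2_1; ring.
Qed.
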